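(* Let $R$ be a commutative ring with identity and let $M$ be a torsion-free unitary $R$-module. Then the following are equivalent: (1) $M$ is a Noetherian module; (2) $M$ is a $P$-Noetherian module for all prime ideals $P$ of $R$; (3) $M$ is an $\mathfrak{m}$-Noetherian module for all maximal ideals $\mathfrak{m}$ of $R$.
   Context: For a prime ideal $P$ of $R$ and $S=R\setminus P$, $M$ is $P$-Noetherian if every submodule $L$ of $M$ is $S$-finite, i.e. there exist $s\in S$ and a finitely generated submodule $F$ of $M$ with $Ls\subseteq F\subseteq L$. *)

(* Defs.v *)
From HB Require Import structures.
From mathcomp Require Import all_boot all_order all_algebra.
Set Implicit Arguments. Unset Strict Implicit. Unset Printing Implicit Defensive.
Import GRing.Theory.
Local Open Scope ring_scope.

Definition is_ideal (R : comNzRingType) (I : R -> Prop) : Prop :=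
  [/\ I 0, (forall a b, I a -> I b -> I (a + b)) & (forall r a, I a -> I (r * a))].

Definition is_prime_ideal (R : comNzRingType) (P : R -> Prop) : Prop :=
  [/\ is_ideal P, ~ P 1 & (forall a b, P (a * b) -> P a \/ P b)].

Definition is_maximal_ideal (R : comNzRingType) (m : R -> Prop) : Prop :=
  [/\ is_ideal m, ~ m 1 &
      (forall J : R -> Prop, is_ideal J -> (forall x, m x -> J x) ->
         (forall x, J x <-> m x) \/ J 1)].

Definition is_submodule (R : comNzRingType) (M : lmodType R) (L : M -> Prop) : Prop :=
  [/\ L 0, (forall x y, L x -> L y -> L (x + y)) & (forall r x, L x -> L (r *: x))].

Definition span_seq (R : comNzRingType) (M : lmodType R) (s : seq M) (x : M) : Prop :=
  exists c : 'I_(size s) -> R, x = \sum_(i < size s) c i *: s`_i.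

Definition fin_gen (R : comNzRingType) (M : lmodType R) (F : M -> Prop) : Prop :=
  exists s : seq M, forall x, F x <-> span_seq s x.

Definition noetherian_module (R : comNzRingType) (M : lmodType R) : Prop :=
  forall L : M -> Prop, is_submodule L -> fin_gen L.

(* L is S-finite for S = R \ P: there exist s in S and a finitely generated
   submodule F with L s ⊆ F ⊆ L. *)
Definition P_finite (R : comNzRingType) (M : lmodType R) (P : R -> Prop) (L : M -> Prop) : Prop :=
  exists s : R, ~ P s /\ exists F : M -> Prop,
    [/\ fin_gen F, (forall x, L x -> F (s *: x)) & (forall x, F x -> L x)].

Definition P_noetherian (R : comNzRingType) (M : lmodType R) (P : R -> Prop) : Prop :=
  forall L : M -> Prop, is_submodule L -> P_finite P L.

Definition torsion_free (R : comNzRingType) (M : lmodType R) : Prop :=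
  forall (r : R) (x : M), r *: x = 0 -> r = 0 \/ x = 0.

(* Main.v *)
Require Import Defs.
From HB Require Import structures.
From mathcomp Require Import all_boot all_order all_algebra.
From mathcomp Require Import boolp classical_sets.
Set Implicit Arguments. Unset Strict Implicit.
Import GRing.Theory.
Local Open Scope ring_scope.

Section Aux.
Variables (R : comNzRingType) (M : lmodType R).

Lemma span0 (s : seq M) : span_seq s 0.
Proof. exists (fun _ => 0); rewrite big1 // => i _; exact: scale0r. Qed.

Lemma spanD (s : seq M) x y : span_seq s x -> span_seq s y -> span_seq s (x + y).
Proof.
move=> [c1 ->] [c2 ->]; exists (fun i => c1 i + c2 i).
by rewrite -big_split /=; apply: eq_bigr => i _; rewrite scalerDl.
Qed.

Lemma spanZ (s : seq M) r x : span_seq s x -> span_seq s (r *: x).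
Proof.
move=> [c ->]; exists (fun i => r * c i).
by rewrite scaler_sumr; apply: eq_bigr => i _; rewrite scalerA.
Qed.

Lemma span_mem (s : seq M) y : y \in s -> span_seq s y.
Proof.
move=> ys; have ilt : (index y s < size s)%N by rewrite index_mem.
pose i := Ordinal ilt.
exists (fun j => if j == i then 1 else 0).
rewrite (bigD1 i) //= eqxx scale1r big1 ?addr0 ?nth_index //.
by move=> j /negbTE ->; rewrite scale0r.
Qed.

Lemma span_sub (s : seq M) (K : M -> Prop) x : is_submodule K ->
  (forall y, y \in s -> K y) -> span_seq s x -> K x.
Proof.
move=> [K0 KD KZ] Ks [c ->].
apply: (big_ind K) => // i _; apply: KZ; apply: Ks; exact: mem_nth.
Qed.

Lemma span_submod (s : seq M) : is_submodule (span_seq s).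
Proof. split; [exact: span0 | exact: spanD | exact: spanZ]. Qed.

End Aux.

Theorem proposition2p3 (R : comNzRingType) (M : lmodType R) :
  torsion_free M ->
  (noetherian_module M <->
     (forall P : R -> Prop, is_prime_ideal P -> P_noetherian M P)) /\
  ((forall P : R -> Prop, is_prime_ideal P -> P_noetherian M P) <->
     (forall m : R -> Prop, is_maximal_ideal m -> P_noetherian M m)).
Proof.
move=> _.
have maxprime : forall m : R -> Prop, is_maximal_ideal m -> is_prime_ideal m.
  move=> m [[m0 mD mM] m1 mmax]; split => // a b mab.
  have [ma|nma] := pselect (m a); first by left.
  right.
  pose K := fun x : R => exists r y, m y /\ x = r * a + y.
  have Kid : is_ideal K.
    split.
    - by exists 0, 0; split => //; rewrite mul0r addr0.
    - move=> x z [r [y [my ->]]] [r' [y' [my' ->]]].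
      exists (r + r'), (y + y'); split; first exact: mD.
      by rewrite mulrDl -!addrA; congr (_ + _); rewrite addrCA.
    - move=> r' x [r [y [my ->]]]; exists (r' * r), (r' * y); split; first exact: mM.
      by rewrite mulrDr mulrA.
  have [H|[r [y [my e]]]] := mmax K Kid (fun x mx => ex_intro _ 0 (ex_intro _ x (conj mx (esym (etrans (congr1 (fun z => z + x) (mul0r a)) (add0r x)))))).
    by exfalso; apply: nma; apply/H; exists 1, 0; split => //; rewrite mul1r addr0.
  have -> : b = r * (a * b) + b * y by rewrite mulrA -(mulrC b) -mulrDr -e mulr1.
  by apply: mD; apply: mM.
have easy : noetherian_module M ->
    forall P : R -> Prop, is_prime_ideal P -> P_noetherian M P.
  move=> HN P [_ P1 _] L Ls; exists 1; split => //.
  exists L; split => //; first exact: HN.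
  by move=> x Lx; rewrite scale1r.
have key : (forall m : R -> Prop, is_maximal_ideal m -> P_noetherian M m) ->
    noetherian_module M.
  move=> HP L Ls.
  pose J := fun r : R => exists t : seq M, (forall y, y \in t -> L y) /\
                                    forall x, L x -> span_seq t (r *: x).
  have [L0 LD LZ] := Ls.
  have Jid : is_ideal J.
    split.
    - exists [::]; split => // x _; rewrite scale0r; exact: span0.
    - move=> a b [t1 [t1L H1]] [t2 [t2L H2]]; exists (t1 ++ t2); split.
        by move=> y; rewrite mem_cat => /orP[]; [apply: t1L | apply: t2L].
      move=> x Lx; rewrite scalerDl; apply: spanD.
        apply: (span_sub (span_submod _)) (H1 x Lx) => y yt.
        by apply: span_mem; rewrite mem_cat yt.
      apply: (span_sub (span_submod _)) (H2 x Lx) => y yt.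
      by apply: span_mem; rewrite mem_cat yt orbT.
    - move=> r a [t [tL H]]; exists t; split => // x Lx.
      by rewrite -scalerA; apply: spanZ; apply: H.
  have [J1|nJ1] := pselect (J 1).
    case: J1 => t [tL H]; exists t => x; split.
      by move=> Lx; have := H x Lx; rewrite scale1r.
    exact: span_sub.
  exfalso.
  have [J0 JD JM] := Jid.
  pose Pp := fun X : R -> Prop => (forall x, ~ X x) \/
     [/\ is_ideal X, (forall x, J x -> X x) & ~ X 1].
  have [|A [PA Amax]] := @Zorn_bigcup R Pp.
    move=> F FP Ftot.
    have hF : forall X, F X -> forall y, X y ->
        [/\ is_ideal X, (forall x, J x -> X x) & ~ X 1].
      move=> X FX y Xy; case: (FP X FX) => // /(_ y); tauto.
    have [[x0 [X0 FX0 X0x]]|none] := pselect (exists x, exists2 X, F X & X x).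
      have [[X00 _ _] JX0 _] := hF X0 FX0 x0 X0x.
      right; split.
      - split.
        + by exists X0.
        + move=> a b [X FX Xa] [Y FY Yb].
          case: (Ftot X Y FX FY) => sub.
          * have [[_ YD _] _ _] := hF Y FY b Yb.
            by exists Y => //; apply: YD => //; apply: sub.
          * have [[_ XD _] _ _] := hF X FX a Xa.
            by exists X => //; apply: XD => //; apply: sub.
        + move=> r a [X FX Xa]; have [[_ _ XM] _ _] := hF X FX a Xa.
          by exists X => //; apply: XM.
      - by move=> x Jx; exists X0 => //; apply: JX0.
      - by move=> [X FX X1]; have [_ _ ] := hF X FX 1 X1; apply.
    left => x Ux; apply: none; exists x; exact: Ux.
  case: PA => [A0|[Aid JA A1]].
    apply: (Amax J); last by right; split.
    split; first by move=> x /A0.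
    by move=> /(_ 0 J0) /A0.
  have Amaxi : is_maximal_ideal A.
    split => // K Kid AK.
    have [K1|nK1] := pselect (K 1); first by right.
    left; have [KA|nKA] := pselect (forall x, K x -> A x).
      by move=> x; split; [apply: KA | apply: AK].
    exfalso; apply: (Amax K); first by split.
    by right; split => // x Jx; apply: AK; apply: JA.
  have [s [nAs [F [[t Ft] LF FL]]]] := HP A Amaxi L Ls.
  apply: nAs; apply: JA; exists t; split.
    by move=> y yt; apply: FL; apply/Ft; apply: span_mem.
  by move=> x Lx; apply/Ft; apply: LF.
split; split => //.
- by move=> H; apply: key => m mm; apply: H; apply: maxprime.
- by move=> H m mm; apply: H; apply: maxprime.
- by move=> H; apply: easy; apply: key.
Qed.
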